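(* Let $F\subseteq\{1,\dots,d\}$ and $\beta=\hat\beta(F)$. Let $\beta'\in\mathbb{R}^d$ have support $F'$, and let $s$ be a positive integer with $|F\cup F'|\le s$. Let $i$ be an index satisfying $Q(\beta)-\min_{\eta}Q(\beta+\eta e_i)\ge Q(\beta)-\min_{j,\eta}Q(\beta+\eta e_j)$ (i.e. $i$ attains the maximal single-coordinate decrease). Then $$|F'-F|\big(Q(\beta)-\min_\eta Q(\beta+\eta e_i)\big)\ge\frac{\rho_-(s)}{\rho_+(1)}\big(Q(\beta)-Q(\beta')\big).$$
   Context: Let $Q:\mathbb{R}^d\to\mathbb{R}$ be convex and continuously differentiable. $e_j$ is the $j$-th standard basis vector, $\mathrm{supp}(\beta)=\{j:\beta_j\ne0\}$, $\|\beta\|_0=|\mathrm{supp}(\beta)|$, $A-B$ is set difference. For $F\subseteq\{1,\dots,d\}$, $\hat\beta(F)$ denotes a minimizer of $Q$ over $\{\beta:\mathrm{supp}(\beta)\subseteq F\}$ (assumed to exist). For a positive integer $s$, the restricted strong convexity constants $\rho_-(s),\rho_+(s)>0$ are constants such that for all $\beta,\beta'\in\mathbb{R}^d$ with $\|\beta'-\beta\|_0\le s$: $\frac{\rho_-(s)}{2}\|\beta'-\beta\|^2\le Q(\beta')-Q(\beta)-\langle\nabla Q(\beta),\beta'-\beta\rangle\le\frac{\rho_+(s)}{2}\|\beta'-\beta\|^2.$ *)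

(* Defs.v *)
(* classical reals. Vectors of R^d are represented as
   functions nat -> R that vanish at coordinates >= d (predicate inRd);
   coordinates are indexed 0..d-1 (paper's 1..d). *)
From Stdlib Require Import Reals List.
Open Scope R_scope.

Definition vec := nat -> R.

Definition inRd (d : nat) (v : vec) : Prop := forall k, (d <= k)%nat -> v k = 0.

Definition vadd (v w : vec) : vec := fun k => v k + w k.
Definition vsub (v w : vec) : vec := fun k => v k - w k.
Definition vscale (a : R) (v : vec) : vec := fun k => a * v k.

Definition e (i : nat) : vec := fun k => if Nat.eqb k i then 1 else 0.

Definition inner (d : nat) (v w : vec) : R :=
  fold_right Rplus 0 (map (fun k => v k * w k) (seq 0 d)).
Definition norm (d : nat) (v : vec) : R := sqrt (inner d v v).

Definition card (d : nat) (p : nat -> bool) : nat :=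
  length (filter p (seq 0 d)).

Definition nzb (x : R) : bool := if Req_EM_T x 0 then false else true.

Definition l0 (d : nat) (v : vec) : nat := card d (fun k => nzb (v k)).

Definition convex_on (d : nat) (Q : vec -> R) : Prop :=
  forall x y t, inRd d x -> inRd d y -> 0 <= t <= 1 ->
    Q (vadd (vscale t x) (vscale (1 - t) y)) <= t * Q x + (1 - t) * Q y.

Definition is_gradient (d : nat) (Q : vec -> R) (g : vec -> vec) : Prop :=
  forall x, inRd d x -> inRd d (g x) /\
    forall eps, 0 < eps -> exists delta, 0 < delta /\
      forall h, inRd d h -> 0 < norm d h < delta ->
        Rabs (Q (vadd x h) - Q x - inner d (g x) h) <= eps * norm d h.

Definition continuous_on (d : nat) (g : vec -> vec) : Prop :=
  forall x, inRd d x -> forall eps, 0 < eps -> exists delta, 0 < delta /\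
    forall y, inRd d y -> norm d (vsub y x) < delta -> norm d (vsub (g y) (g x)) < eps.

(* restricted strong convexity / smoothness with constants rm = rho_-(s), rp = rho_+(s) *)
Definition RSC (d : nat) (Q : vec -> R) (g : vec -> vec) (s : nat) (rm rp : R) : Prop :=
  0 < rm /\ 0 < rp /\
  forall b b', inRd d b -> inRd d b' -> (l0 d (vsub b' b) <= s)%nat ->
    rm / 2 * (norm d (vsub b' b))^2 <= Q b' - Q b - inner d (g b) (vsub b' b) /\
    Q b' - Q b - inner d (g b) (vsub b' b) <= rp / 2 * (norm d (vsub b' b))^2.

(* Main.v *)
Require Import Defs.
From Stdlib Require Import Reals Lra Lia List Arith.
Open Scope R_scope.
From Stdlib Require Import FunctionalExtensionality.

Definition Ssum (l : list nat) (f : nat -> R) : R := fold_right Rplus 0 (map f l).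

Lemma Ssum_le l f h : (forall k, In k l -> f k <= h k) -> Ssum l f <= Ssum l h.
Proof.
  induction l as [|a l IH]; intros H; unfold Ssum in *; simpl; [lra|].
  unfold Ssum in IH. assert (H1 := H a (or_introl eq_refl)).
  assert (fold_right Rplus 0 (map f l) <= fold_right Rplus 0 (map h l)) by
    (apply IH; intros; apply H; right; auto). lra.
Qed.

Lemma Ssum_zero l f : (forall k, In k l -> f k = 0) -> Ssum l f = 0.
Proof.
  induction l as [|a l IH]; intros H; unfold Ssum in *; simpl; [lra|].
  unfold Ssum in IH. rewrite IH by (intros; apply H; right; auto).
  rewrite (H a (or_introl eq_refl)). lra.
Qed.

Lemma Ssum_plus l f h : Ssum l (fun k => f k + h k) = Ssum l f + Ssum l h.
Proof. induction l; unfold Ssum in *; simpl; [lra|]. rewrite IHl. lra. Qed.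

Lemma Ssum_scale l c f : Ssum l (fun k => c * f k) = c * Ssum l f.
Proof. induction l; unfold Ssum in *; simpl; [lra|]. rewrite IHl. lra. Qed.

Lemma Ssum_single n a j f : (a <= j < a + n)%nat -> (forall k, k <> j -> f k = 0) ->
  Ssum (seq a n) f = f j.
Proof.
  revert a. induction n as [|n IH]; intros a Hj H; [lia|].
  unfold Ssum; simpl; fold (Ssum (seq (S a) n) f). destruct (Nat.eq_dec a j) as [<-|Hne].
  - assert (Ssum (seq (S a) n) f = 0).
    { apply Ssum_zero. intros k Hk. apply in_seq in Hk. apply H. lia. }
    rewrite H0. lra.
  - rewrite H by auto. rewrite IH by (auto; lia). lra.
Qed.

Lemma Ssum_sq_nonneg l w : 0 <= Ssum l (fun k => w k * w k).
Proof. induction l; unfold Ssum in *; simpl; [lra|]. pose proof (Rle_0_sqr (w a)). unfold Rsqr in H. lra. Qed.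

Lemma norm_sq d w : norm d w ^ 2 = inner d w w.
Proof.
  unfold norm. simpl. rewrite Rmult_1_r. apply sqrt_sqrt. apply Ssum_sq_nonneg.
Qed.

Lemma inner_single d v w j c : (j < d)%nat -> (forall k, k <> j -> w k = 0) -> w j = c ->
  inner d v w = v j * c.
Proof.
  intros Hj Hw Hc. unfold inner. fold (Ssum (seq 0 d) (fun k => v k * w k)).
  rewrite (Ssum_single d 0 j); [now rewrite Hc | lia |].
  intros k Hk. rewrite Hw by auto. ring.
Qed.

Lemma filter_len_mono l (p q : nat -> bool) : (forall k, In k l -> p k = true -> q k = true) ->
  (length (filter p l) <= length (filter q l))%nat.
Proof.
  induction l as [|a l IH]; intros H; simpl; [lia|].
  assert (IH' := IH (fun k Hk => H k (or_intror Hk))).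
  destruct (p a) eqn:Ea.
  - rewrite (H a (or_introl eq_refl) Ea). simpl. lia.
  - destruct (q a); simpl; lia.
Qed.

Lemma filter_len_single l (p : nat -> bool) j : NoDup l ->
  (forall k, In k l -> p k = true -> k = j) -> (length (filter p l) <= 1)%nat.
Proof.
  induction l as [|a l IH]; intros Hnd H; simpl; [lia|].
  inversion Hnd; subst.
  destruct (p a) eqn:Ea.
  - assert (a = j) by (apply H; simpl; auto). subst.
    assert (length (filter p l) = 0%nat).
    { destruct (filter p l) as [|b r] eqn:Ef; auto.
      assert (In b (filter p l)) by (rewrite Ef; simpl; auto).
      apply filter_In in H0 as [Hb Hpb]. assert (b = j) by (apply H; simpl; auto).
      subst; contradiction. }
    simpl; lia.
  - apply IH; auto. intros; apply H; simpl; auto.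
Qed.

Lemma sum_ind_le l (p : nat -> bool) a M : (forall k, In k l -> p k = true -> a k <= M) ->
  Ssum l (fun k => if p k then a k else 0) <= INR (length (filter p l)) * M.
Proof.
  induction l as [|x l IH]; intros H; unfold Ssum in *; simpl; [lra|].
  assert (IH' := IH (fun k Hk => H k (or_intror Hk))).
  destruct (p x) eqn:Ex; cbn [filter length map fold_right].
  - rewrite S_INR. assert (a x <= M) by (apply H; simpl; auto). lra.
  - lra.
Qed.

Lemma nzb_true x : nzb x = true -> x <> 0.
Proof. unfold nzb. destruct (Req_EM_T x 0); congruence. Qed.
Lemma nzb_false x : nzb x = false -> x = 0.
Proof. unfold nzb. destruct (Req_EM_T x 0); congruence. Qed.
Lemma nzb_of x : x <> 0 -> nzb x = true.
Proof. unfold nzb. destruct (Req_EM_T x 0); congruence. Qed.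

Theorem mainTheorem10
  (d : nat) (Q : vec -> R) (g : vec -> vec)
  (Hconv : convex_on d Q) (Hgrad : is_gradient d Q g) (Hcont : continuous_on d g)
  (s : nat) (Hs : (1 <= s)%nat)
  (rm_s rp_s rm_1 rp_1 : R)
  (HRs : RSC d Q g s rm_s rp_s) (HR1 : RSC d Q g 1 rm_1 rp_1)
  (F : nat -> bool) (beta : vec)
  (Hb : inRd d beta) (HbF : forall k, (k < d)%nat -> beta k <> 0 -> F k = true)
  (Hbopt : forall gam, inRd d gam ->
     (forall k, (k < d)%nat -> gam k <> 0 -> F k = true) -> Q beta <= Q gam)
  (beta' : vec) (Hb' : inRd d beta')
  (Hcard : (card d (fun k => orb (F k) (nzb (beta' k))) <= s)%nat)
  (i : nat) (Hi : (i < d)%nat) (eta_i : R)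
  (Hmin_i : forall eta, Q (vadd beta (vscale eta_i (e i))) <= Q (vadd beta (vscale eta (e i))))
  (Hbest : forall j eta, (j < d)%nat ->
     Q (vadd beta (vscale eta_i (e i))) <= Q (vadd beta (vscale eta (e j)))) :
  INR (card d (fun k => andb (nzb (beta' k)) (negb (F k))))
    * (Q beta - Q (vadd beta (vscale eta_i (e i))))
  >= rm_s / rp_1 * (Q beta - Q beta').
Proof.
  destruct HRs as [rms_pos [rps_pos HRs']].
  destruct HR1 as [rm1_pos [rp1_pos HR1']].
  set (G := g beta).
  set (D := Q beta - Q (vadd beta (vscale eta_i (e i)))).
  assert (vs : forall j t k, vsub (vadd beta (vscale t (e j))) beta k = if Nat.eqb k j then t else 0).
  { intros j t k. unfold vsub, vadd, vscale, e. destruct (Nat.eqb k j); ring. }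
  assert (inb : forall j t, (j < d)%nat -> inRd d (vadd beta (vscale t (e j)))).
  { intros j t Hj k Hk. unfold vadd, vscale, e. rewrite Hb by auto.
    destruct (Nat.eqb_spec k j); [lia|ring]. }
  assert (up1 : forall j t, (j < d)%nat ->
     Q (vadd beta (vscale t (e j))) <= Q beta + t * G j + rp_1 / 2 * t ^ 2).
  { intros j t Hj.
    assert (Hl0 : (l0 d (vsub (vadd beta (vscale t (e j))) beta) <= 1)%nat).
    { unfold l0, card. apply (filter_len_single _ _ j); [apply seq_NoDup|].
      intros k _ Hk. apply nzb_true in Hk. rewrite vs in Hk.
      destruct (Nat.eqb_spec k j); [auto| congruence]. }
    destruct (HR1' beta _ Hb (inb j t Hj) Hl0) as [_ H2].
    rewrite norm_sq in H2.
    rewrite (inner_single d _ _ j t Hj) in H2;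
      [|intros k Hk; rewrite vs; destruct (Nat.eqb_spec k j); congruence
       |rewrite vs, Nat.eqb_refl; auto].
    rewrite (inner_single d _ _ j t Hj) in H2;
      [|intros k Hk; rewrite vs; destruct (Nat.eqb_spec k j); congruence
       |rewrite vs, Nat.eqb_refl; auto].
    fold G in H2. rewrite vs, Nat.eqb_refl in H2. simpl. lra. }
  assert (Gz : forall j, (j < d)%nat -> F j = true -> G j = 0).
  { intros j Hj HFj.
    set (u := G j / rp_1).
    assert (Hu : G j = rp_1 * u) by (unfold u; field; lra).
    assert (H1 := up1 j (- u) Hj).
    assert (H2 : Q beta <= Q (vadd beta (vscale (- u) (e j)))).
    { apply Hbopt; [apply inb; auto|].
      intros k Hk Hnz. unfold vadd, vscale, e in Hnz.
      destruct (Nat.eqb_spec k j); [subst; auto|].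
      apply HbF; auto. intro Hc; apply Hnz; rewrite Hc; ring. }
    rewrite Hu in H1 |- *. simpl in H1.
    assert (u * u <= 0) by nra. nra. }
  assert (Dk : forall k, (k < d)%nat -> G k * G k / (2 * rp_1) <= D).
  { intros k Hk.
    set (u := G k / rp_1).
    assert (Hu : G k = rp_1 * u) by (unfold u; field; lra).
    assert (H1 := up1 k (- u) Hk).
    assert (H2 := Hbest k (- u) Hk).
    assert (Hq : G k * G k / (2 * rp_1) = rp_1 * u * u / 2) by (rewrite Hu; field; lra).
    rewrite Hq. unfold D. rewrite Hu in H1. simpl in H1. nra. }
  assert (Hl0s : (l0 d (vsub beta' beta) <= s)%nat).
  { eapply Nat.le_trans; [|exact Hcard]. unfold l0, card.
    apply filter_len_mono. intros k Hk Hnz. apply in_seq in Hk.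
    apply nzb_true in Hnz. unfold vsub in Hnz.
    destruct (Req_dec (beta' k) 0) as [Hz|Hz].
    - rewrite (HbF k) by (lia || (intro Hc; apply Hnz; rewrite Hz, Hc; ring)). auto.
    - rewrite (nzb_of _ Hz). apply Bool.orb_true_r. }
  destruct (HRs' beta beta' Hb Hb' Hl0s) as [H1 _].
  rewrite norm_sq in H1. fold G in H1.
  set (x := vsub beta' beta) in *.
  set (p := fun k => andb (nzb (beta' k)) (negb (F k))).
  assert (Hsum : inner d G x + rm_s / 2 * inner d x x
     = Ssum (seq 0 d) (fun k => G k * x k + rm_s / 2 * (x k * x k))).
  { rewrite Ssum_plus, Ssum_scale. reflexivity. }
  assert (Hpt : Ssum (seq 0 d) (fun k => - (if p k then G k * G k / (2 * rm_s) else 0))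
              <= Ssum (seq 0 d) (fun k => G k * x k + rm_s / 2 * (x k * x k))).
  { apply Ssum_le. intros k Hk. apply in_seq in Hk.
    unfold p. destruct (F k) eqn:EF.
    - rewrite Gz by (auto; lia). simpl. rewrite Bool.andb_false_r. nra.
    - destruct (nzb (beta' k)) eqn:En; simpl.
      + set (w := G k / rm_s).
        assert (Hw : G k = rm_s * w) by (unfold w; field; lra).
        assert (Hq : G k * G k / (2 * rm_s) = rm_s * w * w / 2) by (rewrite Hw; field; lra).
        rewrite Hq, Hw. assert (0 <= rm_s * ((w + x k) * (w + x k))) by (apply Rmult_le_pos; [lra|apply Rle_0_sqr]). nra.
      + apply nzb_false in En.
        assert (beta k = 0).
        { destruct (Req_dec (beta k) 0); auto. rewrite (HbF k) in EF; [discriminate|lia|auto]. }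
        unfold x, vsub. rewrite En, H. nra. }
  assert (Hneg : Ssum (seq 0 d) (fun k => - (if p k then G k * G k / (2 * rm_s) else 0))
     = - Ssum (seq 0 d) (fun k => if p k then G k * G k / (2 * rm_s) else 0)).
  { replace (- Ssum (seq 0 d) (fun k => if p k then G k * G k / (2 * rm_s) else 0)) with (-1 * Ssum (seq 0 d) (fun k => if p k then G k * G k / (2 * rm_s) else 0)) by ring.
    rewrite <- (Ssum_scale _ (-1)). apply f_equal. apply functional_extensionality. intros; ring. }
  assert (Hind := sum_ind_le (seq 0 d) p (fun k => G k * G k / (2 * rm_s)) (rp_1 / rm_s * D)).
  assert (Hb2 : Ssum (seq 0 d) (fun k => if p k then G k * G k / (2 * rm_s) else 0)
          <= INR (card d p) * (rp_1 / rm_s * D)).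
  { apply Hind. intros k Hk _. apply in_seq in Hk.
    assert (Hdk := Dk k ltac:(lia)).
    assert (Heq : G k * G k / (2 * rm_s) = rp_1 / rm_s * (G k * G k / (2 * rp_1))) by (field; lra).
    rewrite Heq. apply Rmult_le_compat_l; [|auto].
    apply Rlt_le. apply Rdiv_lt_0_compat; auto. }
  assert (Hfin : Q beta - Q beta' <= INR (card d p) * (rp_1 / rm_s * D)) by lra.
  fold p. apply Rle_ge.
  assert (Hc := pos_INR (card d p)).
  apply (Rmult_le_compat_l (rm_s / rp_1)) in Hfin; [|apply Rlt_le, Rdiv_lt_0_compat; auto].
  replace (rm_s / rp_1 * (INR (card d p) * (rp_1 / rm_s * D))) with (INR (card d p) * D) in Hfin
    by (field; lra).
  exact Hfin.
Qed.
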